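(* $\mathsf{ICM}$ equals the variety generated by the class $\mathsf{ICF}$ of implicitly closed fields, and the term $t(x,y,z)=x(x-y)(x-y)^*+z(1-(x-y)(x-y)^* )$ satisfies, for every $\mathbf A\in\mathsf{ICF}$ and $a,b,c\in A$, $t^{\mathbf A}(a,b,c)=c$ if $a=b$ and $t^{\mathbf A}(a,b,c)=a$ otherwise. Consequently $\mathsf{ICM}$ is a discriminator variety.
   Context: A field is weakly rooted if it has characteristic $0$, or has prime characteristic $p$ and every element has a $p$-th root. Weak inverse: $a^*=a^{-1}$ if $a\ne0$, $0^*=0$. Weak $p$-root (in a weakly rooted field, $p$ prime): $r_p(a)=\sqrt[p]{a}$ if the characteristic is $p$, and $0$ otherwise. An implicitly closed field is a weakly rooted field (ring language) expanded by $(\,)^*$ and all $r_p$; $\mathsf{ICF}$ is their class. $\mathsf{ICM}$ is the class of algebras isomorphic to subalgebras of direct products of members of $\mathsf{ICF}$. A variety is a discriminator variety if it is generated by a class $\mathsf K$ admitting a term $t(x,y,z)$ with $t^{\mathbf A}(a,b,c)=c$ if $a=b$ and $=a$ otherwise, for all $\mathbf A\in\mathsf K$. *)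

(* Defs.v *)
From HB Require Import structures.
From mathcomp Require Import all_boot all_order all_algebra.
Import GRing.Theory.
Local Open Scope ring_scope.

Definition primeT := {p : nat | prime p}.

Record ICAlg := {
  car   : Type;
  zero  : car;
  one   : car;
  add   : car -> car -> car;
  opp   : car -> car;
  mul   : car -> car -> car;
  wstar : car -> car;
  wroot : primeT -> car -> car
}.

Set Implicit Arguments. Unset Strict Implicit. Unset Printing Implicit Defensive.

Definition is_hom (A B : ICAlg) (f : car A -> car B) : Prop :=
  f (zero A) = zero B /\ f (one A) = one B /\
  (forall x y, f (add A x y) = add B (f x) (f y)) /\
  (forall x, f (opp A x) = opp B (f x)) /\
  (forall x y, f (mul A x y) = mul B (f x) (f y)) /\
  (forall x, f (wstar A x) = wstar B (f x)) /\
  (forall p x, f (wroot A p x) = wroot B p (f x)).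

Definition isomorphic (A B : ICAlg) : Prop :=
  exists f : car A -> car B, is_hom f /\ bijective f.

Definition prodAlg (I : Type) (F : I -> ICAlg) : ICAlg := {|
  car := forall i, car (F i);
  zero := fun i => zero (F i);
  one := fun i => one (F i);
  add := fun x y i => add (F i) (x i) (y i);
  opp := fun x i => opp (F i) (x i);
  mul := fun x y i => mul (F i) (x i) (y i);
  wstar := fun x i => wstar (F i) (x i);
  wroot := fun p x i => wroot (F i) p (x i) |}.

Definition algClass := ICAlg -> Prop.

(* A variety: class closed under homomorphic images (H), subalgebras up to
   isomorphism, i.e. domains of embeddings (S), and direct products (P). *)
Definition is_variety (V : algClass) : Prop :=
  (forall (A B : ICAlg) (f : car A -> car B),
      V A -> is_hom f -> (forall b, exists a, f a = b) -> V B) /\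
  (forall (A B : ICAlg) (f : car A -> car B),
      V B -> is_hom f -> injective f -> V A) /\
  (forall (I : Type) (F : I -> ICAlg), (forall i, V (F i)) -> V (prodAlg F)).

Definition varGen (K : algClass) : algClass :=
  fun A => forall V : algClass, is_variety V -> (forall B, K B -> V B) -> V A.

Definition weakly_rooted (F : fieldType) : Prop :=
  forall p : nat, p \in [pchar F] -> forall a : F, exists b : F, b ^+ p == a.

Section ICFofField.
Variables (F : fieldType) (hF : weakly_rooted F).

Definition weak_root (p : primeT) (a : F) : F :=
  match boolP (sval p \in [pchar F]) with
  | AltTrue H => xchoose (hF H a)
  | AltFalse _ => 0
  end.

(* weak inverse: MathComp's inverse satisfies 0^-1 = 0 in a field *)
Definition ICF_of : ICAlg := {|
  car := F;
  zero := 0; one := 1;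
  add := fun x y => x + y;
  opp := fun x => - x;
  mul := fun x y => x * y;
  wstar := fun x => x^-1;
  wroot := weak_root |}.
End ICFofField.

Definition ICF : algClass :=
  fun A => exists (F : fieldType) (hF : weakly_rooted F), isomorphic A (ICF_of hF).

Definition ICM : algClass :=
  fun A => exists (I : Type) (F : I -> ICAlg), (forall i, ICF (F i)) /\
    exists f : car A -> car (prodAlg F), is_hom f /\ injective f.

Inductive term : Type :=
  | tVar : nat -> term
  | tZero : term
  | tOne : term
  | tAdd : term -> term -> term
  | tOpp : term -> term
  | tMul : term -> term -> term
  | tStar : term -> term
  | tRoot : primeT -> term -> term.

Fixpoint eval (A : ICAlg) (e : nat -> car A) (t : term) : car A :=
  match t with
  | tVar n => e n
  | tZero => zero A
  | tOne => one A
  | tAdd s u => add A (eval e s) (eval e u)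
  | tOpp s => opp A (eval e s)
  | tMul s u => mul A (eval e s) (eval e u)
  | tStar s => wstar A (eval e s)
  | tRoot p s => wroot A p (eval e s)
  end.

Definition val3 (A : ICAlg) (a b c : car A) : nat -> car A :=
  fun n => match n with 0 => a | 1 => b | _ => c end.

Definition eval3 (A : ICAlg) (t : term) (a b c : car A) : car A :=
  eval (val3 a b c) t.

Definition discriminator_on (K : algClass) (t : term) : Prop :=
  forall A, K A -> forall a b c : car A,
    (a = b -> eval3 t a b c = c) /\ (a <> b -> eval3 t a b c = a).

Definition discriminator_variety (V : algClass) : Prop :=
  exists (K : algClass) (t : term),
    (forall A, V A <-> varGen K A) /\ discriminator_on K t.

Definition tx := tVar 0.
Definition ty := tVar 1.
Definition tz := tVar 2.
Definition tsub (s u : term) := tAdd s (tOpp u).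
Definition disc_term : term :=
  tAdd (tMul (tMul tx (tsub tx ty)) (tStar (tsub tx ty)))
       (tMul tz (tsub tOne (tMul (tsub tx ty) (tStar (tsub tx ty))))).

(* Main.v *)
Require Import Defs.
From mathcomp Require Import all_boot all_order all_algebra.
From HB Require Import structures.
From mathcomp Require Import boolp classical_sets.
From mathcomp Require Import ring.
From Stdlib Require Import ClassicalEpsilon FunctionalExtensionality.
Import GRing.Theory.
Set Implicit Arguments. Unset Strict Implicit. Unset Printing Implicit Defensive.

Definition holds (A : ICAlg) (s t : term) := forall e : nat -> car A, eval e s = eval e t.

Lemma hom_eval (A B : ICAlg) (f : car A -> car B) (e : nat -> car A) t :
  is_hom f -> f (eval e t) = eval (fun n => f (e n)) t.
Proof.
move=> [h0 [h1 [hadd [hopp [hmul [hst hro]]]]]].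
elim: t => //= [s IHs u IHu|s IHs|s IHs u IHu|s IHs|p s IHs];
  by rewrite ?hadd ?hopp ?hmul ?hst ?hro ?IHs ?IHu.
Qed.

Lemma holds_inj (A B : ICAlg) (f : car A -> car B) s t :
  is_hom f -> injective f -> holds B s t -> holds A s t.
Proof. by move=> hf fi H e; apply: fi; rewrite !(hom_eval _ _ hf) H. Qed.

Lemma holds_surj (A B : ICAlg) (f : car A -> car B) s t :
  is_hom f -> (forall b, exists a, f a = b) -> holds A s t -> holds B s t.
Proof.
move=> hf fs H e.
pose e' n := proj1_sig (constructive_indefinite_description _ (fs (e n))).
have He : (fun n => f (e' n)) = e.
  by apply: functional_extensionality => n; rewrite /e'; case: constructive_indefinite_description.
by rewrite -He -!(hom_eval _ _ hf) H.
Qed.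

Lemma prod_eval (I : Type) (F : I -> ICAlg) (e : nat -> car (prodAlg F)) t i :
  eval e t i = eval (fun n => e n i) t.
Proof.
elim: t => //= [s IHs u IHu|s IHs|s IHs u IHu|s IHs|p s IHs]; by rewrite ?IHs ?IHu.
Qed.

Lemma holds_prod (I : Type) (F : I -> ICAlg) s t :
  (forall i, holds (F i) s t) -> holds (prodAlg F) s t.
Proof.
move=> H e; apply: functional_extensionality_dep => i.
by rewrite !prod_eval H.
Qed.

Local Open Scope ring_scope.

Fixpoint tnat (n : nat) : term := if n is n'.+1 then tAdd tOne (tnat n') else tZero.
Fixpoint tpow (t : term) (n : nat) : term := if n is n'.+1 then tMul t (tpow t n') else tOne.

Inductive Sigma : term -> term -> Prop :=
| S_addA : Sigma (tAdd tx (tAdd ty tz)) (tAdd (tAdd tx ty) tz)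
| S_addC : Sigma (tAdd tx ty) (tAdd ty tx)
| S_add0 : Sigma (tAdd tZero tx) tx
| S_addN : Sigma (tAdd (tOpp tx) tx) tZero
| S_mulA : Sigma (tMul tx (tMul ty tz)) (tMul (tMul tx ty) tz)
| S_mulC : Sigma (tMul tx ty) (tMul ty tx)
| S_mul1 : Sigma (tMul tOne tx) tx
| S_mulD : Sigma (tMul (tAdd tx ty) tz) (tAdd (tMul tx tz) (tMul ty tz))
| S_R1 : Sigma (tMul (tMul tx (tStar tx)) tx) tx
| S_R2 : Sigma (tMul (tMul (tStar tx) (tStar tx)) tx) (tStar tx)
| S_R5 (p : primeT) : Sigma (tMul (tRoot p tx) (tnat (sval p))) tZero
| S_R6 (p : primeT) : Sigma
    (tMul (tsub (tpow (tRoot p tx) (sval p)) tx)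
          (tsub tOne (tMul (tnat (sval p)) (tStar (tnat (sval p)))))) tZero.

Definition SatS (A : ICAlg) := forall s t, Sigma s t -> holds A s t.

Lemma eval_tnat (F : fieldType) (hF : weakly_rooted F) (e : nat -> F) n :
  @eval (ICF_of hF) e (tnat n) = n%:R.
Proof. by elim: n => //= n ->; rewrite mulrS. Qed.

Lemma eval_tpow (F : fieldType) (hF : weakly_rooted F) (e : nat -> F) t n :
  @eval (ICF_of hF) e (tpow t n) = (@eval (ICF_of hF) e t) ^+ n.
Proof. by elim: n => //= n ->; rewrite exprS. Qed.

Lemma weak_rootT (F : fieldType) (hF : weakly_rooted F) p a :
  sval p \in [pchar F] -> (weak_root hF p a) ^+ sval p = a.
Proof.
move=> H0; rewrite /weak_root.
case: {-}_ / boolP => H; last by rewrite H0 in H.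
exact: (eqP (xchooseP (hF _ H a))).
Qed.
Lemma weak_rootF (F : fieldType) (hF : weakly_rooted F) p a :
  sval p \notin [pchar F] -> weak_root hF p a = 0.
Proof.
move=> H0; rewrite /weak_root.
by case: {-}_ / boolP => H //; rewrite H in H0.
Qed.

Lemma SatS_ICF (F : fieldType) (hF : weakly_rooted F) : SatS (ICF_of hF).
Proof.
move=> s t [] => [||||||||||p|p] e; rewrite /= ?eval_tnat ?eval_tpow.
- exact: addrA.
- exact: addrC.
- exact: add0r.
- exact: addNr.
- exact: mulrA.
- exact: mulrC.
- exact: mul1r.
- exact: mulrDl.
- set x := e 0; have [->|x0] := eqVneq x 0; first by rewrite !mul0r.
  by rewrite divff // mul1r.
- set x := e 0; have [->|x0] := eqVneq x 0; first by rewrite invr0 !mul0r.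
  by rewrite -mulrA mulVf // mulr1.
- have [H|H] := boolP (sval p \in [pchar F]).
    by rewrite (pcharf0 H) mulr0.
  by rewrite weak_rootF // mul0r.
- have [H|H] := boolP (sval p \in [pchar F]).
    by rewrite weak_rootT // subrr mul0r.
  have pz : (sval p)%:R != 0 :> F.
    by apply: contra H => pz; rewrite inE (svalP p) pz.
  by rewrite divff // subrr mulr0.
Qed.

Local Open Scope ring_scope.

Section Rep.
Variable B : ICAlg.
Hypothesis hB : SatS B.
Definition T := car B.
HB.instance Definition _ := gen_eqMixin T.
HB.instance Definition _ := gen_choiceMixin T.
Let addA : associative (Defs.add B) := fun x y z => hB S_addA (val3 x y z).
Let addC : commutative (Defs.add B) := fun x y => hB S_addC (val3 x y x).
Let add0 : left_id (Defs.zero B) (Defs.add B) := fun x => hB S_add0 (val3 x x x).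
Let addN : left_inverse (Defs.zero B) (Defs.opp B) (Defs.add B) := fun x => hB S_addN (val3 x x x).
HB.instance Definition _ := GRing.isZmodule.Build T addA addC add0 addN.
Let mulA : associative (Defs.mul B) := fun x y z => hB S_mulA (val3 x y z).
Let mulC : commutative (Defs.mul B) := fun x y => hB S_mulC (val3 x y x).
Let mul1 : left_id (Defs.one B) (Defs.mul B) := fun x => hB S_mul1 (val3 x x x).
Let mulD : left_distributive (Defs.mul B) (Defs.add B) := fun x y z => hB S_mulD (val3 x y z).
HB.instance Definition _ := GRing.Zmodule_isComPzRing.Build T mulA mulC mul1 mulD.


Definition st (x : T) : T := Defs.wstar B x.
Definition r p (x : T) : T := Defs.wroot B p x.

Lemma evT_tnat (e : nat -> car B) n : eval e (tnat n) = n%:R :> T.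
Proof. by elim: n => //= n ->; rewrite mulrS. Qed.
Lemma evT_tpow (e : nat -> car B) t n : eval e (tpow t n) = (eval e t : T) ^+ n.
Proof. by elim: n => //= n ->; rewrite exprS. Qed.

Lemma R1 (x : T) : x * st x * x = x.
Proof. exact: (hB S_R1 (val3 x x x)). Qed.
Lemma R2 (x : T) : st x * st x * x = st x.
Proof. exact: (hB S_R2 (val3 x x x)). Qed.
Lemma R5 p (x : T) : r p x * (sval p)%:R = 0.
Proof. by have := hB (S_R5 p) (val3 x x x); rewrite /= evT_tnat. Qed.
Lemma R6 p (x : T) :
  (r p x ^+ sval p - x) * (1 - (sval p)%:R * st ((sval p)%:R : T)) = 0.
Proof. by have := hB (S_R6 p) (val3 x x x); rewrite /= evT_tpow evT_tnat. Qed.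

Definition ideal (M : T -> Prop) :=
  M 0 /\ (forall x y, M x -> M y -> M (x + y)) /\ (forall x y, M y -> M (x * y)).
Definition good (M : T -> Prop) :=
  ideal M /\ ~ M 1 /\ (forall x y, M (x * y) -> M x \/ M y).

Lemma exists_good (d : T) : d != 0 -> exists M, good M /\ ~ M d.
Proof.
move=> dn0; pose e := d * st d.
have en0 : e != 0.
  by apply: contra dn0 => /eqP e0; apply/eqP; rewrite -(R1 d) -/e e0 mul0r.
pose P := fun A : set T => (forall x y, A x -> A y -> A (x + y)) /\
   (forall x y, A y -> A (x * y)) /\ ~ A e.
have [A [[Aadd [Amul Ae]] Amax]] : exists A, P A /\ forall B, proper A B -> ~ P B.
  apply: Zorn_bigcup => F FP Ftot; split; [|split].
  - move=> x y [X FX Xx] [Y FY Yy].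
    have [XY|YX] := Ftot _ _ FX FY.
      by exists Y => //; apply: (FP _ FY).1 => //; apply: XY.
    by exists X => //; apply: (FP _ FX).1 => //; apply: YX.
  - by move=> x y [X FX Xy]; exists X => //; apply: (FP _ FX).2.1.
  - by move=> [X FX Xe]; apply: (FP _ FX).2.2.
have A0 : A 0.
  have [//|nA0] := pselect (A 0).
  exfalso; apply: (Amax (fun z => A z \/ z = 0)).
    split; first by move=> z Az; left.
    by move=> H; apply: nA0; apply: H; right.
  split; [|split].
  - move=> x y [Ax|->] [Ay|->]; rewrite ?addr0 ?add0r; by [left; apply: (Aadd)|left|left|right].
  - by move=> x y [Ay|->]; [left; apply: (Amul)|right; rewrite mulr0].
  - by case=> // /eqP; rewrite (negPf en0).
have gen (x : T) : ~ A x -> exists m u, A m /\ e = m + x * u.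
  move=> nAx.
  pose Ax := fun z => exists m u, A m /\ z = m + x * u.
  have [//|nAxe] := pselect (Ax e).
  exfalso; apply: (Amax Ax).
    split; first by move=> z Az; exists z, 0; rewrite mulr0 addr0.
    by move=> H; apply: nAx; apply: H; exists 0, 1; rewrite mulr1 add0r.
  split; [|split] => //.
  - move=> z w [m1 [u1 [Am1 ->]]] [m2 [u2 [Am2 ->]]].
    exists (m1 + m2), (u1 + u2); split; first exact: Aadd.
    by ring.
  - move=> z w [m1 [u1 [Am1 ->]]]; exists (z * m1), (z * u1); split; first exact: Amul.
    by ring.
exists A; split; last first.
  by move=> Ad; apply: Ae; rewrite /e mulrC; apply: (Amul).
split; first by split.
split; first by move=> A1; apply: Ae; rewrite -(mulr1 e); apply: (Amul).
move=> x y Axy; have [Ax|nAx] := pselect (A x); first by left.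
have [Ay|nAy] := pselect (A y); first by right.
exfalso; have [m1 [u1 [Am1 E1]]] := gen _ nAx; have [m2 [u2 [Am2 E2]]] := gen _ nAy.
apply: Ae.
have ee : e * e = e.
  have -> : e * e = (d * st d * d) * st d by rewrite /e; ring.
  by rewrite R1.
have Ee : e = (m2 + y * u2) * m1 + ((u1 * u2) * (x * y) + (x * u1) * m2).
  by rewrite -ee {1}E1 {1}E2; ring.
rewrite Ee; apply: (Aadd); first exact: Amul.
by apply: (Aadd); apply: (Amul).
Qed.

Section Ideals.
Variables (M : T -> Prop) (hM : good M).
Let hM' := hM.
Lemma M0 : M 0. Proof. by have [[H0 [Ha Hm]] [H1 Hp]] := hM'. Qed.
Lemma Madd x y : M x -> M y -> M (x + y). Proof. by have [[H0 [Ha Hm]] [H1 Hp]] := hM'; auto. Qed.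
Lemma Mmul x y : M y -> M (x * y). Proof. by have [[H0 [Ha Hm]] [H1 Hp]] := hM'; auto. Qed.
Lemma Mmulr x y : M x -> M (x * y). Proof. by rewrite mulrC; apply: Mmul. Qed.
Lemma Mopp x : M x -> M (- x). Proof. by move=> Mx; rewrite -mulN1r; apply: Mmul. Qed.
Lemma Msub x y : M x -> M y -> M (x - y). Proof. by move=> ? ?; apply: Madd => //; apply: Mopp. Qed.
Lemma M1 : ~ M 1. Proof. by have [[H0 [Ha Hm]] [H1 Hp]] := hM'; auto. Qed.
Lemma Mprime x y : M (x * y) -> M x \/ M y. Proof. by have [[H0 [Ha Hm]] [H1 Hp]] := hM'; auto. Qed.
End Ideals.

Definition Q (M : T -> Prop) := {S : T -> Prop | exists x, S = fun y => M (x - y)}.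
Definition cls M (x : T) : Q M := exist _ (fun y => M (x - y)) (ex_intro _ x erefl).
Definition rep M (q : Q M) : T := proj1_sig (cid (proj2_sig q)).

Lemma clsK M (q : Q M) : cls M (rep q) = q.
Proof.
case: q => S HS; rewrite /rep /=; case: cid => x Hx /=.
by apply: eq_exist; rewrite Hx.
Qed.

Lemma cls_eq M (hM : good M) x y : cls M x = cls M y <-> M (x - y).
Proof.
split.
  move=> /(congr1 sval) /= H.
  have := congr1 (fun f => f y) H; simpl; rewrite subrr => ->; exact: M0.
move=> Mxy; apply: eq_exist; apply: funext => z; apply: propext; split => H.
  have -> : y - z = - (x - y) + (x - z) by ring.
  by apply: Madd => //; apply: Mopp.
have -> : x - z = (x - y) + (y - z) by ring.
exact: Madd.
Qed.

Lemma repP M (hM : good M) x : M (rep (cls M x) - x).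
Proof. by apply/(cls_eq hM); rewrite clsK. Qed.

Definition Qzero M : Q M := cls M 0.
Definition Qone M : Q M := cls M 1.
Definition Qadd M (q s : Q M) : Q M := cls M (rep q + rep s).
Definition Qopp M (q : Q M) : Q M := cls M (- rep q).
Definition Qmul M (q s : Q M) : Q M := cls M (rep q * rep s).
Definition Qinv M (q : Q M) : Q M := cls M (st (rep q)).

Section QLemmas.
Variables (M : T -> Prop) (hM : good M).
Lemma Qadd_cls x y : Qadd (cls M x) (cls M y) = cls M (x + y).
Proof.
apply/(cls_eq hM).
have -> : rep (cls M x) + rep (cls M y) - (x + y) =
  (rep (cls M x) - x) + (rep (cls M y) - y) by ring.
by apply: (Madd hM); apply: repP.
Qed.
Lemma Qopp_cls x : Qopp (cls M x) = cls M (- x).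
Proof.
apply/(cls_eq hM).
have -> : - rep (cls M x) - - x = - (rep (cls M x) - x) by ring.
by apply: (Mopp hM); apply: repP.
Qed.
Lemma Qmul_cls x y : Qmul (cls M x) (cls M y) = cls M (x * y).
Proof.
apply/(cls_eq hM).
have -> : rep (cls M x) * rep (cls M y) - (x * y) =
  (rep (cls M x) - x) * rep (cls M y) + x * (rep (cls M y) - y) by ring.
apply: (Madd hM); first by apply: (Mmulr hM); apply: repP.
by apply: (Mmul hM); apply: repP.
Qed.
End QLemmas.

Definition QT M (hM : good M) := Q M.
HB.instance Definition _ M (hM : good M) := gen_eqMixin (QT hM).
HB.instance Definition _ M (hM : good M) := gen_choiceMixin (QT hM).

Ltac qind := repeat match goal with
  | q : Q _ |- _ => rewrite -(clsK q); move: (rep q) => {q} ? end.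

Section QInst.
Variables (M : T -> Prop) (hM : good M).
Lemma QaddA : associative (@Qadd M).
Proof. move=> a b c; qind; rewrite !Qadd_cls //; congr cls; ring. Qed.
Lemma QaddC : commutative (@Qadd M).
Proof. move=> a b; qind; rewrite !Qadd_cls //; congr cls; ring. Qed.
Lemma Qadd0 : left_id (@Qzero M) (@Qadd M).
Proof. move=> a; qind; rewrite /Qzero !Qadd_cls //; congr cls; ring. Qed.
Lemma QaddN : left_inverse (@Qzero M) (@Qopp M) (@Qadd M).
Proof. move=> a; qind; rewrite /Qzero Qopp_cls // !Qadd_cls //; congr cls; ring. Qed.
Lemma QmulA : associative (@Qmul M).
Proof. move=> a b c; qind; rewrite !Qmul_cls //; congr cls; ring. Qed.
Lemma QmulC : commutative (@Qmul M).
Proof. move=> a b; qind; rewrite !Qmul_cls //; congr cls; ring. Qed.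
Lemma Qmul1 : left_id (@Qone M) (@Qmul M).
Proof. move=> a; qind; rewrite /Qone !Qmul_cls //; congr cls; ring. Qed.
Lemma QmulD : left_distributive (@Qmul M) (@Qadd M).
Proof. move=> a b c; qind; rewrite !(Qmul_cls hM, Qadd_cls hM); congr cls; ring. Qed.
Lemma Qone_neq0 : (@Qone M : QT hM) != (@Qzero M : QT hM).
Proof.
apply/eqP => /(cls_eq hM); rewrite subr0; exact: (M1 hM).
Qed.
Lemma QmulV (q : QT hM) : q != (@Qzero M : QT hM) -> Qmul (Qinv q) q = @Qone M.
Proof.
move=> qn0; rewrite /Qinv; set a := rep q.
rewrite -{1}(clsK q) -/a Qmul_cls //; apply/(cls_eq hM).
have : M (a * (st a * a - 1)).
  have -> : a * (st a * a - 1) = (a * st a * a - a) by ring.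
  by rewrite R1 subrr; apply: (M0 hM).
case/(Mprime hM) => // Ma.
by move: qn0; rewrite -(clsK q) -/a; move/eqP; case; apply/(cls_eq hM); rewrite subr0.
Qed.
Lemma Qinv0 : Qinv (@Qzero M) = @Qzero M.
Proof.
rewrite /Qinv /Qzero; apply/(cls_eq hM); rewrite subr0.
have Ma : M (rep (cls M 0)) by have := repP hM 0; rewrite subr0.
by rewrite -R2; apply: (Mmul hM).
Qed.
End QInst.


HB.instance Definition _ M (hM : good M) :=
  GRing.isZmodule.Build (QT hM) (QaddA hM) (QaddC hM) (Qadd0 hM) (QaddN hM).
HB.instance Definition _ M (hM : good M) :=
  GRing.Zmodule_isComNzRing.Build (QT hM) (QmulA hM) (QmulC hM) (Qmul1 hM) (QmulD hM) (@Qone_neq0 M hM).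
HB.instance Definition _ M (hM : good M) :=
  GRing.ComNzRing_isField.Build (QT hM) (@QmulV M hM) (Qinv0 hM).


Lemma frob_inj (F : fieldType) p (H : p \in [pchar F]) (u v : F) :
  u ^+ p = v ^+ p -> u = v.
Proof.
move=> E; have := pFrobenius_autB_comm H (mulrC u v).
by rewrite !pFrobenius_autE E subrr => /eqP; rewrite expf_eq0 subr_eq0 => /andP[_ /eqP].
Qed.

Definition phi M (hM : good M) (x : T) : QT hM := cls M x.

Section QField.
Variables (M : T -> Prop) (hM : good M).
Local Notation F := (QT hM).
Local Notation phi := (@phi M hM).

Lemma phi0 : phi 0 = 0. Proof. by []. Qed.
Lemma phi1 : phi 1 = 1. Proof. by []. Qed.
Lemma phiD x y : phi (x + y) = phi x + phi y.
Proof. by symmetry; apply: (Qadd_cls hM). Qed.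
Lemma phiN x : phi (- x) = - phi x.
Proof. by symmetry; apply: (Qopp_cls hM). Qed.
Lemma phiM x y : phi (x * y) = phi x * phi y.
Proof. by symmetry; apply: (Qmul_cls hM). Qed.
Lemma phi_eq x y : phi x = phi y <-> M (x - y).
Proof. exact: (cls_eq hM). Qed.
Lemma phi_surj (a : F) : exists x, phi x = a.
Proof. by exists (rep a); apply: clsK. Qed.
Lemma phi_nat n : phi n%:R = n%:R.
Proof. by elim: n => // n IH; rewrite !mulrS phiD IH. Qed.
Lemma phi_exp x n : phi (x ^+ n) = phi x ^+ n.
Proof. by elim: n => // n IH; rewrite !exprS phiM IH. Qed.
Lemma phi0P x : phi x = 0 <-> M x.
Proof. by rewrite -phi0 phi_eq subr0. Qed.

Lemma root_char (p : primeT) x : sval p \in [pchar F] -> phi (r p x) ^+ sval p = phi x.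
Proof.
move=> H; have pM : M (sval p)%:R by apply/phi0P; rewrite phi_nat (pcharf0 H).
have nM : ~ M (1 - (sval p)%:R * st (sval p)%:R).
  move=> H1; apply: (M1 hM).
  have -> : (1 : T) = (1 - (sval p)%:R * st (sval p)%:R) + st (sval p)%:R * (sval p)%:R by ring.
  by apply: (Madd hM) => //; apply: (Mmul hM).
have := M0 hM; rewrite -(R6 p x) => /(Mprime hM) [|//].
by rewrite -phi_exp => /phi_eq.
Qed.

Lemma hQ : weakly_rooted F.
Proof.
move=> p H a; pose p' : primeT := exist _ p (pcharf_prime H).
have [x <-] := phi_surj a.
by exists (phi (r p' x)); rewrite (root_char (p := p')).
Qed.

Lemma phiV x : phi (st x) = (phi x)^-1.
Proof.
have [Mx|nMx] := pselect (M x).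
  have -> : phi x = 0 by apply/phi0P.
  by rewrite invr0; apply/phi0P; rewrite -R2; apply: (Mmul hM).
have xn0 : phi x != 0 by apply/eqP => /phi0P.
apply: (mulIf xn0); rewrite mulVf //.
have : M (x * (st x * x - 1)).
  have -> : x * (st x * x - 1) = (x * st x * x - x) by ring.
  by rewrite R1 subrr; apply: (M0 hM).
case/(Mprime hM) => // H.
by rewrite -phiM -phi1; apply/phi_eq.
Qed.

Lemma phiR p x : phi (r p x) = weak_root hQ p (phi x).
Proof.
have [H|H] := boolP (sval p \in [pchar F]).
  apply: (frob_inj H); rewrite weak_rootT //; exact: root_char.
rewrite weak_rootF //; apply/phi0P.
have := M0 hM; rewrite -(R5 p x) => /(Mprime hM) [//|pM].
move: H; rewrite inE (svalP p) /=; move/phi0P: pM; rewrite phi_nat => ->.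
by rewrite eqxx.
Qed.
End QField.

Lemma rep_ICM : ICM B.
Proof.
exists {M : T -> Prop | good M}, (fun i => ICF_of (@hQ (sval i) (svalP i))).
split.
  move=> i; exists (QT (svalP i)), (@hQ _ (svalP i)); exists id; split; last by exists id.
  by do ![split].
exists (fun (x : car B) i => @phi (sval i) (svalP i) x); split.
  split; [|split; [|split; [|split; [|split; [|split]]]]];
    intros; apply: functional_extensionality_dep => i /=.
  - exact: phi0.
  - exact: phi1.
  - exact: phiD.
  - exact: phiN.
  - exact: phiM.
  - exact: phiV.
  - exact: phiR.
move=> a b E; suff: (a : T) - (b : T) == 0 by rewrite subr_eq0 => /eqP.
apply/negPn/negP => dn0.
have [M [gM nMd]] := exists_good dn0.
by have := congr1 (fun f => f (exist _ M gM)) E => /= /phi_eq.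
Qed.
End Rep.

Local Open Scope ring_scope.

Lemma ICF_Sat A : ICF A -> SatS A.
Proof.
move=> [F [hF [f [hf [g fK _]]]]] s t st.
apply: (holds_inj hf (can_inj fK)); exact: SatS_ICF.
Qed.

Lemma ICM_Sat A : ICM A -> SatS A.
Proof.
move=> [I [F [FI [f [hf fi]]]]] s t st.
apply: (holds_inj hf fi); apply: holds_prod => i; exact: ICF_Sat.
Qed.

Lemma ICM_iff A : ICM A <-> SatS A.
Proof. by split; [exact: ICM_Sat | exact: rep_ICM]. Qed.

Lemma ICM_variety : is_variety ICM.
Proof.
split; [|split].
- move=> A B f /ICM_Sat hA hf fs; apply/ICM_iff => s t st.
  exact: (holds_surj hf fs (hA s t st)).
- move=> A B f /ICM_Sat hB hf fi; apply/ICM_iff => s t st.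
  exact: (holds_inj hf fi (hB s t st)).
- move=> I F hF; apply/ICM_iff => s t st; apply: holds_prod => i.
  exact: ICM_Sat.
Qed.

Lemma ICM_varGen A : ICM A <-> varGen ICF A.
Proof.
split.
  move=> [I [F [FI [f [hf fi]]]]] V [VH [VS VP]] KV.
  apply: (VS _ _ f) hf fi; apply: VP => i; exact: KV.
move=> H; apply: H; first exact: ICM_variety.
by move=> B /ICF_Sat /ICM_iff.
Qed.

Lemma disc_ICF : discriminator_on ICF disc_term.
Proof.
move=> A [F [hF [f [hf [g fK gK]]]]] a b c.
have fi := can_inj fK.
have E : f (eval3 disc_term a b c) =
  let x := f a in let y := f b in let z := f c in
  x * (x - y) * (x - y)^-1 + z * (1 - (x - y) * (x - y)^-1).
  by rewrite /eval3 (hom_eval _ _ hf).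
split=> [ab|nab]; apply: (fi); rewrite E /=.
  by rewrite ab subrr !mulr0 mul0r add0r subr0 mulr1.
have nab' : f a - f b != 0.
  by rewrite subr_eq0; apply/eqP => /fi.
by rewrite -mulrA divff // mulr1 subrr mulr0 addr0.
Qed.

Theorem mainTheorem7 :
  (forall A : ICAlg, ICM A <-> varGen ICF A) /\
  (forall A : ICAlg, ICF A -> forall a b c : car A,
      (a = b -> eval3 disc_term a b c = c) /\
      (a <> b -> eval3 disc_term a b c = a)) /\
  discriminator_variety ICM.
Proof.
split; first exact: ICM_varGen.
split; first exact: disc_ICF.
by exists ICF, disc_term; split; [exact: ICM_varGen | exact: disc_ICF].
Qed.
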